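(* Let $N\ge2$, $n=\binom N2$, and for $y\in\mathcal{C}_n$ let $f(y)=\frac1N T(G_y)$, where $T(G)$ is the number of triangles in the graph $G$. Then $\mathcal{D}(f)\le 5n^{3/4}$ and $\mathrm{Lip}(f)\le1$.
   Context: Points $y=(y_{i,j})_{1\le i<j\le N}\in\{-1,1\}^{\binom N2}=\mathcal{C}_n$ are identified with graphs $G_y=([N],E)$ where $(i,j)\in E$ iff $y_{i,j}=1$. For $g:\mathcal{C}_n\to\mathbb{R}$, $\partial_{i} g(y)$ is half the difference of $g$ at $y$ with the $i$-th coordinate set to $+1$ and to $-1$; $\nabla g=(\partial_i g)_i$; $\mathrm{Lip}(g)=\max_{i,y}|\partial_i g(y)|$; $\mathbf{GW}(K)=\mathbb{E}\sup_{x\in K}\langle x,\Gamma\rangle$ with $\Gamma$ standard Gaussian in $\mathbb{R}^n$; $\mathcal{D}(g)=\mathbf{GW}(\{\nabla g(y):y\in\mathcal{C}_n\}\cup\{0\})$. *)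

(* Defs.v *)
From HB Require Import structures.
From mathcomp Require Import all_boot all_order all_algebra.
From mathcomp Require Import all_classical all_reals all_analysis.
Set Implicit Arguments. Unset Strict Implicit. Unset Printing Implicit Defensive.
Import Order.TTheory GRing.Theory Num.Theory.
Local Open Scope ring_scope.

(* Coordinates of C_n: pairs (i,j) of vertices of [N] = 'I_N with i < j. *)
Definition edge (N : nat) := {e : 'I_N * 'I_N | (e.1 < e.2)%N}.

(* A point y of the cube {-1,1}^(N choose 2), encoded as a boolean finfun
   (true <-> +1, false <-> -1). *)
Definition cube (N : nat) := {ffun edge N -> bool}.

Definition adj N (y : cube N) (a b : 'I_N) : bool :=
  if @insub _ (fun e : 'I_N * 'I_N => (e.1 < e.2)%N) (edge N) (a, b) is Some e
  then y e else false.

Definition triangles N (y : cube N) : nat :=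
  #|[set t : 'I_N * 'I_N * 'I_N |
      [&& (t.1.1 < t.1.2)%N, (t.1.2 < t.2)%N,
          adj y t.1.1 t.1.2, adj y t.1.1 t.2 & adj y t.1.2 t.2]]|.

Definition setc N (y : cube N) (e : edge N) (b : bool) : cube N :=
  [ffun e' => if e' == e then b else y e'].

Section Cube.
Variable R : realType.

Definition pd N (g : cube N -> R) (e : edge N) (y : cube N) : R :=
  (g (setc y e true) - g (setc y e false)) / 2.

Definition Lip N (g : cube N -> R) : R :=
  \big[Num.max/0]_(e : edge N) \big[Num.max/0]_(y : cube N) `|pd g e y|.

(* Expectation under a standard Gaussian vector Gamma indexed by a finite type:
   the coordinates listed in s are integrated one after another against the
   standard normal density; the others are fixed by g. Applied to a
   nonnegative function this is the (Tonelli) integral against the product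
   Gaussian measure. *)
Fixpoint gauss_iter (I : eqType) (s : seq I) (F : (I -> R) -> \bar R)
    (g : I -> R) : \bar R :=
  match s with
  | [::] => F g
  | i :: s' =>
      (\int[@lebesgue_measure R]_t
         ((normal_pdf 0 1 t)%:E *
           gauss_iter s' F (fun j => if j == i then t else g j)))%E
  end.

Definition gauss_expect (I : finType) (F : (I -> R) -> \bar R) : \bar R :=
  gauss_iter (enum I) F (fun _ => 0).

(* D(g) = GW({grad g(y) : y in C_n} u {0})
        = E max(0, max_y <grad g(y), Gamma>). *)
Definition Dcomp N (g : cube N -> R) : \bar R :=
  gauss_expect (fun G : edge N -> R =>
    (\big[Num.max/0]_(y : cube N) \sum_(e : edge N) pd g e y * G e)%:E).

End Cube.

(* Main.v *)
Require Import Defs.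
From HB Require Import structures.
From mathcomp Require Import all_boot all_order all_algebra.
From mathcomp Require Import all_classical all_reals all_analysis.
From mathcomp Require Import ring lra measurable_realfun zify.
Import Order.TTheory GRing.Theory Num.Theory.
Local Open Scope ring_scope.
Section G.
Variable R : realType.

Lemma ge0_le_int (f g : R -> \bar R) : (forall x, 0 <= f x)%E -> (forall x, f x <= g x)%E ->
  (\int[@lebesgue_measure R]_x f x <= \int[@lebesgue_measure R]_x g x)%E.
Proof.
move=> f0 fg.
have g0 : forall x, (0 <= g x)%E by move=> x; exact: le_trans (f0 x) (fg x).
rewrite !ge0_integralTE//.
apply: ereal_sup_le => _ [h hf <-]; exists h => // x; exact: le_trans (hf x) (fg x).
Qed.

Lemma gauss_iter_ge0 (I : eqType) (s : seq I) (F : (I -> R) -> \bar R) :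
  (forall g, 0 <= F g)%E -> forall g, (0 <= gauss_iter s F g)%E.
Proof.
move=> F0; elim: s => [|i s IH] g /=; first exact: F0.
apply: integral_ge0 => t _; apply: mule_ge0; last exact: IH.
by rewrite lee_fin normal_pdf_ge0.
Qed.

Lemma gauss_iter_mono (I : eqType) (s : seq I) (F G : (I -> R) -> \bar R) :
  (forall g, 0 <= F g)%E -> (forall g, F g <= G g)%E ->
  forall g, (gauss_iter s F g <= gauss_iter s G g)%E.
Proof.
move=> F0 FG; elim: s => [|i s IH] g /=; first exact: FG.
apply: ge0_le_int => t.
  by apply: mule_ge0; [rewrite lee_fin normal_pdf_ge0|exact: gauss_iter_ge0].
apply: lee_wpmul2l; first by rewrite lee_fin normal_pdf_ge0.
exact: IH.
Qed.

Lemma pdf_exp (a t : R) :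
  normal_pdf 0 1 t * expR (a * t) = expR (a ^+ 2 / 2) * normal_pdf a 1 t.
Proof.
rewrite /normal_pdf oner_eq0 /normal_fun mulrCA -mulrA; congr (_ * _).
rewrite -!expRD; congr expR.
rewrite expr1n subr0; field; rewrite ?pnatr_eq0 // -mulr2n pnatr_eq0.
Qed.


Lemma int_pdf_exp (a c : R) :
  (\int[@lebesgue_measure R]_t (normal_pdf 0 1 t * (c * expR (a * t)))%:E
   = (c * expR (a ^+ 2 / 2))%:E)%E.
Proof.
under eq_integral do rewrite mulrCA pdf_exp mulrA EFinM.
rewrite integralZl//; last exact: integrable_normal_pdf.
by rewrite integral_normal_pdf mule1.
Qed.

Lemma int_pdf_sumexp (K : finType) (c a : K -> R) : (forall k, 0 <= c k) ->
  (\int[@lebesgue_measure R]_t ((normal_pdf 0 1 t)%:E * (\sum_k c k * expR (a k * t))%:E)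
   = (\sum_k c k * expR (a k ^+ 2 / 2))%:E)%E.
Proof.
move=> c0.
under eq_integral do rewrite -EFinM mulr_sumr -sumEFin.
rewrite ge0_integral_sum//; last first.
  move=> k t _; rewrite lee_fin mulr_ge0 ?normal_pdf_ge0 ?mulr_ge0 ?expR_ge0//.
  move=> k; apply/measurable_EFinP; apply: measurable_funM.
    exact: measurable_normal_pdf.
  apply: measurable_funM => //.
  by apply: measurableT_comp => //; apply: measurable_funM.
rewrite -sumEFin; apply: eq_bigr => k _; exact: int_pdf_exp.
Qed.


Lemma gauss_iter_Fexp (I K : finType) (w : K -> R) (al : K -> I -> R) (s : seq I) g :
  (forall k, 0 <= w k) -> uniq s ->
  gauss_iter s (fun h => (\sum_k w k * \prod_i expR (al k i * h i))%:E) g =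
  (\sum_k w k * \prod_i (if i \in s then expR (al k i ^+ 2 / 2) else expR (al k i * g i)))%:E.
Proof.
move=> w0; elim: s g => [|i s IH] g /=.
  by move=> _; congr (_%:E); apply: eq_bigr => k _; congr (_ * _); apply: eq_bigr => j _; rewrite in_nil.
case/andP => nis us.
under eq_integral do rewrite IH //.
pose P := fun k => \prod_(j | j != i) (if j \in s then expR (al k j ^+ 2 / 2) else expR (al k j * g j)).
transitivity (\int[@lebesgue_measure R]_t ((normal_pdf 0 1 t)%:E * (\sum_k (w k * P k) * expR (al k i * t))%:E))%E.
  apply: eq_integral => t _; congr (_ * _)%E; congr EFin; apply: eq_bigr => k _.
  rewrite (bigD1 i) //= (negbTE nis) eqxx -mulrA [expR _ * _]mulrC; congr (_ * (_ * _)).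
  by apply: eq_bigr => j /negbTE ji; rewrite ji.
rewrite int_pdf_sumexp; last first.
  by move=> k; rewrite mulr_ge0 // /P prodr_ge0 // => j _; case: ifP => _; exact: expR_ge0.
congr (_%:E); apply: eq_bigr => k _.
rewrite [in RHS](bigD1 i) //= in_cons eqxx /= -mulrA [expR _ * _]mulrC; congr (_ * (_ * _)).
by apply: eq_bigr => j ji; rewrite in_cons (negbTE ji).
Qed.

End G.

Set Implicit Arguments. Unset Strict Implicit.

Lemma adj_setc N (y : cube N) (e : edge N) b u v :
  adj (setc y e b) u v = if (u, v) == val e then b else adj y u v.
Proof.
rewrite /adj; case: insubP => [e' huv <-|hn].
  by rewrite ffunE -val_eqE.
case: eqP => // he; exfalso; move: hn; rewrite he; by rewrite (valP e).
Qed.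

Lemma adj_lt N (y : cube N) u v : adj y u v -> (u < v)%N.
Proof. by rewrite /adj; case: insubP => // e' huv _ _. Qed.

Definition Ptri N (y : cube N) (t : 'I_N * 'I_N * 'I_N) : bool :=
  [&& (t.1.1 < t.1.2)%N, (t.1.2 < t.2)%N,
          adj y t.1.1 t.1.2, adj y t.1.1 t.2 & adj y t.1.2 t.2].

Lemma triE N (y : cube N) : triangles y = (\sum_t Ptri y t)%N.
Proof.
rewrite /triangles cardsE -sum1_card big_mkcond /=; apply: eq_bigr => t _.
by rewrite unfold_in /Ptri; case: ifP.
Qed.

Definition X1 N (y : cube N) (i j k : 'I_N) : bool := [&& (j < k)%N, adj y i k & adj y j k].
Definition X2 N (y : cube N) (i j k : 'I_N) : bool := [&& (i < k)%N, (k < j)%N, adj y i k & adj y k j].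
Definition X3 N (y : cube N) (i j k : 'I_N) : bool := [&& (k < i)%N, adj y k i & adj y k j].

Lemma Ptri_setc N (y : cube N) (e : edge N) (t : 'I_N * 'I_N * 'I_N) :
  let i := (val e).1 in let j := (val e).2 in
  (Ptri (setc y e true) t : nat) = (Ptri (setc y e false) t
    + ((t.1.1 == i) && (t.1.2 == j) && X1 y i j t.2)
    + ((t.1.1 == i) && (t.2 == j) && X2 y i j t.1.2)
    + ((t.1.2 == i) && (t.2 == j) && X3 y i j t.1.1))%N.
Proof.
case: t => [[a b] c]; rewrite /Ptri /X1 /X2 /X3 /= !adj_setc.
case: e => [[i j] /= hij]; rewrite !xpair_eqE.
case: (a =P i) => [?|/eqP/negbTE Ha]; case: (b =P j) => [?|/eqP/negbTE Hb];
case: (c =P j) => [?|/eqP/negbTE Hc]; case: (b =P i) => [?|/eqP/negbTE Hb'];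
subst; rewrite ?eqxx ?Ha ?Hb ?Hc ?Hb' /= ?andbF ?andbT ?addn0.
all: try by rewrite ltnn ?andbF.
all: try by rewrite (ltn_geF hij) ?andbF.
all: rewrite ?add0n ?hij //.
all: by rewrite ltnn in hij.
Qed.

Definition sadj N (y : cube N) (u v : 'I_N) : bool := adj y u v || adj y v u.

Lemma adjF N (y : cube N) (u v : 'I_N) : (v <= u)%N -> adj y u v = false.
Proof. move=> h; apply/negbTE/negP => /adj_lt; lia. Qed.

Lemma sadjE N (y : cube N) u v : sadj y u v = if (u < v)%N then adj y u v else adj y v u.
Proof.
rewrite /sadj; case: ltnP => h.
  by rewrite (adjF y (ltnW h)) orbF.
by rewrite (adjF y h).
Qed.

Definition tau N (y : cube N) (k : 'I_N) (e : edge N) : bool :=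
  [&& k != (val e).1, k != (val e).2, sadj y (val e).1 k & sadj y (val e).2 k].

Lemma X123 N (y : cube N) (i j k : 'I_N) : (i < j)%N ->
  (X1 y i j k + X2 y i j k + X3 y i j k =
   [&& k != i, k != j, sadj y i k & sadj y j k])%N.
Proof.
move=> hij; rewrite /X1 /X2 /X3 !sadjE.
case: (ltngtP k i) => [ki|ik|/val_inj->].
- have h1 : k != i by rewrite neq_ltn ki.
  have h2 : k != j by rewrite neq_ltn (ltn_trans ki hij).
  have -> : (j < k)%N = false by lia.
  by rewrite /= h1 h2.
- have h1 : k != i by rewrite neq_ltn ik orbT.
  rewrite h1 /=.
  case: (ltngtP k j) => [kj|jk|/val_inj->] /=.
  + have h2 : k != j by rewrite neq_ltn kj.
    by rewrite h2 /=; case: (adj y i k); case: (adj y k j).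
  + have h2 : k != j by rewrite neq_ltn jk orbT.
    by rewrite h2 /=; case: (adj y i k); case: (adj y j k).
  + by rewrite eqxx.
- have -> : (j < i)%N = false by lia.
  by rewrite eqxx.
Qed.

Lemma sum_triple n (F : 'I_n -> 'I_n -> 'I_n -> nat) :
  (\sum_(t : 'I_n * 'I_n * 'I_n) F t.1.1 t.1.2 t.2 = \sum_a \sum_b \sum_c F a b c)%N.
Proof. by rewrite pair_bigA /= pair_bigA. Qed.

Lemma sum_pick n (i : 'I_n) (F : 'I_n -> nat) :
  (forall a, a != i -> F a = 0%N) -> (\sum_a F a = F i)%N.
Proof. by move=> h; rewrite (bigD1 i) //= big1 ?addn0. Qed.

Lemma tri_setc N (y : cube N) (e : edge N) :
  triangles (setc y e true) = (triangles (setc y e false) + \sum_k tau y k e)%N.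
Proof.
rewrite !triE; under eq_bigr do rewrite Ptri_setc.
rewrite !big_split /= -!addnA; congr (_ + _)%N.
rewrite /tau; under [RHS]eq_bigr do rewrite -X123 ?(valP e) //.
rewrite !big_split /= -!addnA.
set i := (val e).1; set j := (val e).2.
rewrite (sum_triple (fun a b c => (a == i) && (b == j) && X1 y i j c)).
rewrite (sum_triple (fun a b c => (a == i) && (c == j) && X2 y i j b)).
rewrite (sum_triple (fun a b c => (b == i) && (c == j) && X3 y i j a)).
congr (_ + (_ + _))%N.
- rewrite (@sum_pick _ i); last first.
    by move=> a /negbTE nai; apply: big1 => b _; apply: big1 => c _; rewrite nai.
  rewrite (@sum_pick _ j); last first.
    by move=> b /negbTE nbj; apply: big1 => c _; rewrite nbj andbF.
  by rewrite !eqxx.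
- rewrite (@sum_pick _ i); last first.
    by move=> a /negbTE nai; apply: big1 => b _; apply: big1 => c _; rewrite nai.
  apply: eq_bigr => b _.
  rewrite (@sum_pick _ j); last first.
    by move=> c /negbTE ncj; rewrite ncj andbF.
  by rewrite !eqxx.
- apply: eq_bigr => a _.
  rewrite (@sum_pick _ i); last first.
    by move=> b /negbTE nbi; apply: big1 => c _; rewrite nbi.
  rewrite (@sum_pick _ j); last first.
    by move=> c /negbTE ncj; rewrite ncj andbF.
  by rewrite !eqxx.
Qed.

Lemma big_optE (R : nmodType) (T : finType) (F : option T -> R) :
  \sum_o F o = F None + \sum_x F (Some x).
Proof.
have -> : index_enum (option T) = None :: map Some (index_enum T).
  rewrite /index_enum !unlock /= /option_enum; by rewrite unlock.
by rewrite big_cons big_map.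
Qed.

Section Main.
Variable R : realType.
Variable N : nat.
Hypothesis N2 : (2 <= N)%N.

Notation ff := (fun y : cube N => (triangles y)%:R / N%:R : R).

Lemma NR0 : N%:R != 0 :> R.
Proof. by rewrite pnatr_eq0 -lt0n (leq_trans _ N2). Qed.

Lemma NRgt0 : 0 < N%:R :> R.
Proof. by rewrite ltr0n (leq_trans _ N2). Qed.

Lemma pdE y e : pd ff e y = (\sum_(k < N) (tau y k e : nat)%:R) / (2 * N%:R).
Proof.
rewrite /pd tri_setc natrD natr_sum.
set S := (\sum_(k < N) _).
have hN := NR0; field.
exact: hN.
Qed.

Lemma sum_tau_le y e : \sum_(k < N) (tau y k e : nat)%:R <= N%:R :> R.
Proof.
rewrite -natr_sum ler_nat.
rewrite -[X in (_ <= X)%N]card_ord -sum1_card.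
by apply: leq_sum => k _; exact: leq_b1.
Qed.

Lemma bigmaxR_le (I : finType) (F : I -> R) B :
  0 <= B -> (forall i, F i <= B) -> \big[Num.max/0]_i F i <= B.
Proof. by move=> B0 h; elim/big_ind: _ => // x z hx hz; rewrite ge_max hx hz. Qed.

Lemma bigmaxR_ge0 (I : finType) (F : I -> R) : 0 <= \big[Num.max/0]_i F i.
Proof. by elim/big_rec: _ => // i x _ hx; rewrite le_max hx orbT. Qed.

Lemma Lip_le : Lip ff <= 1.
Proof.
apply: bigmaxR_le => // e; apply: bigmaxR_le => // y.
rewrite pdE ger0_norm ?divr_ge0 ?sumr_ge0 ?mulr_ge0 ?ler0n //.
rewrite ler_pdivrMr ?mulr_gt0 ?NRgt0 // mul1r.
have := sum_tau_le y e; have := NRgt0; lra.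
Qed.


Definition cc (k : 'I_N) (x : {ffun 'I_N -> bool}) (e : edge N) : R :=
  ([&& k != (val e).1, k != (val e).2, x (val e).1 & x (val e).2] : nat)%:R.
Definition nb (y : cube N) (k : 'I_N) : {ffun 'I_N -> bool} := [ffun v => sadj y v k].
Definition Q (k : 'I_N) (x : {ffun 'I_N -> bool}) (G : edge N -> R) : R :=
  \sum_e cc k x e * G e.

Lemma cc_nb y k e : cc k (nb y k) e = (tau y k e : nat)%:R.
Proof. by rewrite /cc /tau !ffunE. Qed.

Lemma sum_pd y G :
  \sum_e pd ff e y * G e = \sum_(k < N) Q k (nb y k) G / (2 * N%:R).
Proof.
transitivity (\sum_e \sum_(k < N) (tau y k e : nat)%:R * G e / (2 * N%:R)).
  apply: eq_bigr => e _; rewrite pdE !mulr_suml; apply: eq_bigr => k _.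
  by rewrite mulrAC.
rewrite exchange_big; apply: eq_bigr => k _; rewrite /Q mulr_suml.
by apply: eq_bigr => e _; rewrite cc_nb.
Qed.

Lemma exp_trick (u L l : R) : 0 < l -> u <= (L + expR (l * u - L)) / l.
Proof.
move=> l0; rewrite ler_pdivlMr //.
have := expR_ge1Dx (l * u - L); have := expR_ge0 (l * u - L); nra.
Qed.

Lemma prod_expR (I : finType) (F : I -> R) : \prod_i expR (F i) = expR (\sum_i F i).
Proof. by rewrite (big_morph expR (@expRD R) (@expR0 R)). Qed.

Definition wt (L l : R) (o : option ('I_N * {ffun 'I_N -> bool})) : R :=
  if o is Some _ then expR (- L) / (2 * N%:R * l) else L / (2 * l).
Definition alp (l : R) (o : option ('I_N * {ffun 'I_N -> bool})) (e : edge N) : R :=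
  if o is Some p then l * cc p.1 p.2 e else 0.

Lemma le_sum_one (T : finType) (F : T -> R) a : (forall x, 0 <= F x) -> F a <= \sum_x F x.
Proof. by move=> h; rewrite (bigD1 a) //= lerDl sumr_ge0. Qed.

Lemma bound_pt y G L l : 0 < l -> 0 <= L ->
  \sum_e pd ff e y * G e <= \sum_o wt L l o * \prod_e expR (alp l o e * G e).
Proof.
move=> l0 L0; rewrite sum_pd.
apply: (@le_trans _ _ (\sum_(k < N) (L + \sum_x expR (l * Q k x G - L)) / l / (2 * N%:R))).
  apply: ler_sum => k _; apply: ler_wpM2r; first by rewrite invr_ge0 mulr_ge0 ?ler0n.
  apply: le_trans (exp_trick (Q k (nb y k) G) L l0) _.
  apply: ler_wpM2r; first by rewrite invr_ge0 ltW.
  rewrite lerD2l; apply: (@le_sum_one _ (fun x => expR (l * Q k x G - L))) => x.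
  exact: expR_ge0.
have lN : l != 0 by rewrite gt_eqF.
have hN := NR0.
have E1 : forall k x, expR (l * Q k x G - L) / l / (2 * N%:R) =
    expR (- L) / (2 * N%:R * l) * \prod_e expR (l * cc k x e * G e).
  move=> k x; rewrite prod_expR /Q mulr_sumr.
  under eq_bigr do rewrite mulrA.
  rewrite addrC expRD; field.
  by apply/andP; split.
rewrite le_eqVlt; apply/orP; left; apply/eqP.
rewrite big_optE /=.
have -> : \prod_e expR (0 * G e) = 1 by rewrite big1 // => e _; rewrite mul0r expR0.
rewrite mulr1.
under eq_bigr => k _ do rewrite mulrDl mulrDl !mulr_suml.
rewrite big_split /= sumr_const card_ord.
congr (_ + _).
  rewrite -mulr_natl; field.
  by apply/andP; split.
rewrite pair_bigA; apply: eq_bigr => -[k x] _; exact: E1.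
Qed.


Lemma card_edge : (#|{: edge N}| <= N * N)%N.
Proof.
have -> : (N * N)%N = #|{: 'I_N * 'I_N}| by rewrite card_prod card_ord.
by rewrite card_sig max_card.
Qed.

Lemma two_pow_le : (2 ^ N)%:R <= expR N%:R :> R.
Proof.
rewrite -[N%:R]mulr1 expRM_natl natrX; apply: lerXn2r; rewrite ?nnegrE ?ler0n ?expR_ge0 //.
by have := expR_ge1Dx (1 : R); rewrite (_ : 1 + 1 = 2 :> R) //; ring.
Qed.


Lemma wt_ge0 L l o : 0 < l -> 0 <= L -> 0 <= wt L l o.
Proof.
move=> l0 L0; case: o => [p|] /=.
  by rewrite divr_ge0 ?expR_ge0 // mulr_ge0 ?mulr_ge0 ?ler0n ?ltW.
by rewrite divr_ge0 // mulr_ge0 ?ler0n ?ltW.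
Qed.

Lemma Gf_ge0 L l G : 0 < l -> 0 <= L ->
  0 <= \sum_o wt L l o * \prod_e expR (alp l o e * G e).
Proof.
move=> l0 L0; apply: sumr_ge0 => o _; apply: mulr_ge0; first exact: wt_ge0.
by apply: prodr_ge0 => e _; exact: expR_ge0.
Qed.

Lemma cc01 k x e : cc k x e ^+ 2 <= 1.
Proof. by rewrite /cc; case: (_ && _) => /=; rewrite ?expr1n ?expr0n. Qed.

Lemma real_bound L l : 0 < l -> L = N%:R + l ^+ 2 * N%:R ^+ 2 / 2 ->
  \sum_o wt L l o * \prod_e expR (alp l o e ^+ 2 / 2) <= (L + 1) / (2 * l).
Proof.
move=> l0 LE.
have L0 : 0 <= L by rewrite LE; apply: addr_ge0; rewrite ?ler0n // mulr_ge0 // mulr_ge0 // sqr_ge0.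
rewrite big_optE /=.
have -> : \prod_(e : edge N) expR ((0 : R) ^+ 2 / 2) = 1.
  by rewrite big1 // => e _; rewrite expr0n /= mul0r expR0.
rewrite mulr1.
set B := expR (- L) / (2 * N%:R * l) * expR (l ^+ 2 * N%:R ^+ 2 / 2).
have hB : forall p : 'I_N * {ffun 'I_N -> bool},
    expR (- L) / (2 * N%:R * l) * \prod_e expR ((l * cc p.1 p.2 e) ^+ 2 / 2) <= B.
  move=> p; apply: ler_wpM2l; first by rewrite divr_ge0 ?expR_ge0 // mulr_ge0 ?mulr_ge0 ?ler0n ?ltW.
  rewrite prod_expR ler_expR.
  apply: (@le_trans _ _ (\sum_(e : edge N) l ^+ 2 / 2)).
    apply: ler_sum => e _; rewrite exprMn ler_wpM2r // ler_piMr ?sqr_ge0 //; exact: cc01.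
  rewrite sumr_const -[_ *+ #|_|]mulr_natr.
  apply: (@le_trans _ _ (l ^+ 2 / 2 * (N * N)%:R)).
    apply: ler_wpM2l; first by rewrite divr_ge0 ?sqr_ge0.
    rewrite ler_nat; exact: card_edge.
  rewrite natrM; lra.
apply: (@le_trans _ _ (L / (2 * l) + B *+ #|{: 'I_N * {ffun 'I_N -> bool}}|)).
  rewrite lerD2l -sumr_const; exact: ler_sum.
rewrite card_prod card_ord card_ffun card_bool card_ord.
have hN := NR0.
have -> : B *+ (N * 2 ^ N) = (2 ^ N)%:R * expR (- N%:R) / (2 * l).
  rewrite /B -mulr_natl natrM -mulrA [(expR (- L) / _) * _]mulrAC -expRD.
  have -> : - L + l ^+ 2 * N%:R ^+ 2 / 2 = - N%:R by rewrite LE; ring.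
  field; by apply/andP; split; rewrite // gt_eqF.
rewrite [X in _ <= X]mulrDl lerD2l ler_pM2r ?invr_gt0 ?mulr_gt0 //.
rewrite expRN ler_pdivrMr ?expR_gt0 // mul1r; exact: two_pow_le.
Qed.


Lemma expect_bound l L : 0 < l -> L = N%:R + l ^+ 2 * N%:R ^+ 2 / 2 ->
  (Dcomp ff <= ((L + 1) / (2 * l))%:E)%E.
Proof.
move=> l0 LE.
have L0 : 0 <= L by rewrite LE; apply: addr_ge0; rewrite ?ler0n // mulr_ge0 // mulr_ge0 // sqr_ge0.
rewrite /Dcomp /gauss_expect.
set GG := (fun G : edge N -> R => (\sum_o wt L l o * \prod_e expR (alp l o e * G e))%:E).
apply: le_trans; first apply: (@gauss_iter_mono R _ _ _ GG).
- by move=> G; rewrite lee_fin; exact: bigmaxR_ge0.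
- move=> G; rewrite lee_fin; apply: bigmaxR_le; first exact: Gf_ge0.
  by move=> y; exact: bound_pt.
rewrite (@gauss_iter_Fexp R) ?enum_uniq //; last by move=> o; exact: wt_ge0.
rewrite lee_fin; apply: le_trans (real_bound l0 LE).
rewrite le_eqVlt; apply/orP; left; apply/eqP.
apply: eq_bigr => o _; congr (_ * _); apply: eq_bigr => e _; by rewrite mem_enum.
Qed.

End Main.

Unset Implicit Arguments.

Lemma binN2 N : (2 <= N)%N -> (N * N <= 4 * 'C(N, 2))%N.
Proof.
move=> N2; have h : (2 * 'C(N, 2) = N * N.-1)%N by rewrite -mul_bin_diag bin1.
nia.
Qed.

Theorem fact1p10 (R : realType) (N : nat) : (2 <= N)%N ->
  let n := 'C(N, 2) in
  let f := fun y : cube N => (triangles y)%:R / N%:R : R in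
  (Dcomp f <= (5 * (n%:R `^ (3 / 4 : R)))%:E)%E /\ Lip f <= 1.
Proof.
move=> N2 n f; split; last exact: Lip_le.
have n0 : (0 < n)%N by rewrite /n bin_gt0 N2.
have nR : 0 < n%:R :> R by rewrite ltr0n.
set r := n%:R `^ (1 / 4 : R).
have r0 : 0 < r by rewrite powR_gt0.
have r4 : r ^+ 4 = n%:R.
  have e : 1 / 4 * 4%:R = 1 :> R by field.
  by rewrite /r -powR_mulrn ?powR_ge0 // -powRrM e powRr1 ?ler0n.
have r3 : n%:R `^ (3 / 4 : R) = r ^+ 3.
  have e : 1 / 4 * 3%:R = 3 / 4 :> R by field.
  by rewrite /r -powR_mulrn ?powR_ge0 // -powRrM e.
have hn : N%:R ^+ 2 <= 4 * n%:R :> R.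
  by rewrite -natrX -natrM ler_nat expnS expn1; exact: binN2.
have l0 : 0 < r^-1 by rewrite invr_gt0.
have EB := @expect_bound R N N2 (r^-1) _ l0 erefl.
rewrite /f; apply: le_trans EB _.

rewrite lee_fin r3.
have rn0 : r != 0 by rewrite gt_eqF.
have -> : (N%:R + r^-1 ^+ 2 * N%:R ^+ 2 / 2 + 1) / (2 * r^-1) =
    ((N%:R + 1) * r ^+ 2 * 2 + N%:R ^+ 2) / (4 * r) :> R.
  by field.
rewrite ler_pdivrMr ?mulr_gt0 //.
have N2R : 2 <= N%:R :> R by rewrite (ler_nat R 2 N).
set t := r ^+ 2.
have t0 : 0 <= t by rewrite sqr_ge0.
have rt : r ^+ 4 = t ^+ 2 by rewrite /t -exprM.
have hNt : N%:R <= 2 * t by nra.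
have -> : 5 * r ^+ 3 * (4 * r) = 20 * t ^+ 2 by rewrite -rt; ring.
nra.
Qed.
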